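(* Let $\sigma$ be a countable relational signature containing a relation symbol of arity at least $2$. Let $\mathbf P$ be any one of the properties ``$\mathrm{Aut}(\mathcal A)$ is finitely generated'', ``$\mathrm{Aut}(\mathcal A)$ is countably generated'', ``$\mathrm{Aut}(\mathcal A)$ is finitely presentable''. Then $\mathbf P$ is not expressible in $FO(\sigma)$; every abstract logic $L(\sigma)\geq FO(\sigma)$ that can express $\mathbf P$ fails the $\aleph_0$-compactness property; and every such logic which is moreover closed under negation has no sound and complete proof system.
   Context: $\mathrm{Aut}(\mathcal A)$ is the automorphism group of the $\sigma$-structure $\mathcal A$. An abstract logic over $\sigma$ is a pair $(L(\sigma),\models_{L(\sigma)})$ with the satisfaction relation between $\sigma$-structures and members of $L(\sigma)$ isomorphism-invariant; a class is expressed by it if some sentence is satisfied exactly by its members; $L(\sigma)\geq FO(\sigma)$ means every first-order expressible class is $L(\sigma)$-expressible; $\aleph_0$-compactness: every countable finitely satisfiable set of sentences is satisfiable; closed under negation: each sentence has a sentence true exactly where it is false. A proof system $(\Pi,p,c)$ assigns to each $\pi$ a finite sequence of premisses and a conclusion; sound: premisses semantically entail the conclusion; complete: whenever $\Gamma$ entails $\psi$ some $\pi$ has conclusion $\psi$ and all premisses in $\Gamma$. *)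

(* Defs.v *)
From Stdlib Require Import List Relations.
From Stdlib Require Vectors.Fin.
Import ListNotations.

Set Implicit Arguments.

Record signature := Signature {
  sym : Type;
  arity : sym -> nat
}.

Definition countable_signature (sg : signature) : Prop :=
  exists f : sym sg -> nat, forall s t, f s = f t -> s = t.

Record structure (sg : signature) := Structure {
  carrier :> Type;
  carrier_inhabited : inhabited carrier;
  rel : forall s : sym sg, (Fin.t (arity sg s) -> carrier) -> Prop
}.

Arguments rel {sg} _ _ _.

Record iso (sg : signature) (A B : structure sg) := Iso {
  iso_f : A -> B;
  iso_g : B -> A;
  iso_gf : forall a, iso_g (iso_f a) = a;
  iso_fg : forall b, iso_f (iso_g b) = b;
  iso_rel : forall s (t : Fin.t (arity sg s) -> A),
      rel A s t <-> rel B s (fun i => iso_f (t i))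
}.

(** Automorphisms (elements of Aut(A)); group operations are composition,
    inverse and identity, equality is pointwise equality of the maps. *)
Record aut (sg : signature) (A : structure sg) := Aut {
  af : A -> A;
  ag : A -> A;
  aut_gf : forall a, ag (af a) = a;
  aut_fg : forall a, af (ag a) = a;
  aut_rel : forall s (t : Fin.t (arity sg s) -> A),
      rel A s t <-> rel A s (fun i => af (t i))
}.

Arguments af {sg A} _ _.
Arguments ag {sg A} _ _.

Inductive in_gen (sg : signature) (A : structure sg) (X : aut A -> Prop)
  : aut A -> Prop :=
| gen_base : forall x h, X x -> (forall a, af h a = af x a) -> in_gen X h
| gen_id : forall h, (forall a, af h a = a) -> in_gen X h
| gen_mul : forall h1 h2 h, in_gen X h1 -> in_gen X h2 ->
    (forall a, af h a = af h1 (af h2 a)) -> in_gen X h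
| gen_inv : forall h1 h, in_gen X h1 ->
    (forall a, af h a = ag h1 a) -> in_gen X h.

Definition aut_fin_gen (sg : signature) (A : structure sg) : Prop :=
  exists l : list (aut A), forall h, in_gen (fun x => In x l) h.

Definition aut_count_gen (sg : signature) (A : structure sg) : Prop :=
  exists X : nat -> aut A, forall h, in_gen (fun x => exists n, X n = x) h.

(** Words over n letters and their inverses: (i, true) = x_i, (i, false) = x_i^-1. *)
Definition word (n : nat) := list (Fin.t n * bool).

Inductive wstep (n : nat) (rels : list (word n)) : word n -> word n -> Prop :=
| wstep_free : forall (u v : word n) i b,
    wstep rels (u ++ (i, b) :: (i, negb b) :: v) (u ++ v)
| wstep_rel : forall (u v r : word n), In r rels ->
    wstep rels (u ++ r ++ v) (u ++ v).

Definition wconv (n : nat) (rels : list (word n)) : word n -> word n -> Prop :=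
  clos_refl_sym_trans _ (wstep rels).

Fixpoint weval (sg : signature) (A : structure sg) (n : nat)
  (gens : Fin.t n -> aut A) (w : word n) : A -> A :=
  match w with
  | [] => fun a => a
  | (i, b) :: w' => fun a =>
      (if b then af (gens i) else ag (gens i)) (weval gens w' a)
  end.

(** Aut(A) is finitely presentable: the evaluation homomorphism from the free
    group on finitely many generators is onto Aut(A), with kernel the normal
    closure of finitely many relators. *)
Definition aut_fin_pres (sg : signature) (A : structure sg) : Prop :=
  exists (n : nat) (gens : Fin.t n -> aut A) (rels : list (word n)),
    (forall h : aut A, exists w : word n, forall a, weval gens w a = af h a) /\
    (forall w : word n, (forall a, weval gens w a = a) <-> wconv rels w []).

Inductive AutProperty := FinGen | CountGen | FinPres.

Definition has_property (P : AutProperty) (sg : signature) (A : structure sg) : Prop :=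
  match P with
  | FinGen => aut_fin_gen A
  | CountGen => aut_count_gen A
  | FinPres => aut_fin_pres A
  end.

Inductive formula (sg : signature) : Type :=
| FEq : nat -> nat -> formula sg
| FRel : forall s : sym sg, (Fin.t (arity sg s) -> nat) -> formula sg
| FNot : formula sg -> formula sg
| FAnd : formula sg -> formula sg -> formula sg
| FOr : formula sg -> formula sg -> formula sg
| FImp : formula sg -> formula sg -> formula sg
| FEx : nat -> formula sg -> formula sg
| FAll : nat -> formula sg -> formula sg.

Arguments FEq {sg}.
Arguments FRel {sg}.
Arguments FNot {sg}.
Arguments FAnd {sg}.
Arguments FOr {sg}.
Arguments FImp {sg}.
Arguments FEx {sg}.
Arguments FAll {sg}.

Inductive free_in (sg : signature) (x : nat) : formula sg -> Prop :=
| free_eq1 : forall y, free_in x (FEq x y)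
| free_eq2 : forall y, free_in x (FEq y x)
| free_rel : forall s args i, args i = x -> free_in x (FRel s args)
| free_not : forall f, free_in x f -> free_in x (FNot f)
| free_and1 : forall f g, free_in x f -> free_in x (FAnd f g)
| free_and2 : forall f g, free_in x g -> free_in x (FAnd f g)
| free_or1 : forall f g, free_in x f -> free_in x (FOr f g)
| free_or2 : forall f g, free_in x g -> free_in x (FOr f g)
| free_imp1 : forall f g, free_in x f -> free_in x (FImp f g)
| free_imp2 : forall f g, free_in x g -> free_in x (FImp f g)
| free_ex : forall y f, y <> x -> free_in x f -> free_in x (FEx y f)
| free_all : forall y f, y <> x -> free_in x f -> free_in x (FAll y f).

Definition is_sentence (sg : signature) (f : formula sg) : Prop :=
  forall x, ~ free_in x f.

Definition upd (T : Type) (v : nat -> T) (x : nat) (a : T) : nat -> T :=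
  fun y => if Nat.eqb y x then a else v y.

Fixpoint fo_sat (sg : signature) (A : structure sg) (v : nat -> A)
  (f : formula sg) : Prop :=
  match f with
  | FEq x y => v x = v y
  | FRel s args => rel A s (fun i => v (args i))
  | FNot g => ~ fo_sat A v g
  | FAnd g h => fo_sat A v g /\ fo_sat A v h
  | FOr g h => fo_sat A v g \/ fo_sat A v h
  | FImp g h => fo_sat A v g -> fo_sat A v h
  | FEx x g => exists a : A, fo_sat A (upd v x a) g
  | FAll x g => forall a : A, fo_sat A (upd v x a) g
  end.

Definition FO_expressible (sg : signature) (K : structure sg -> Prop) : Prop :=
  exists f : formula sg, is_sentence f /\
    forall A : structure sg, K A <-> (forall v : nat -> A, fo_sat A v f).

Record abstract_logic (sg : signature) := AbstractLogic {
  lsent : Type;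
  lsat : structure sg -> lsent -> Prop;
  lsat_iso : forall A B : structure sg, iso A B ->
      forall phi, lsat A phi <-> lsat B phi
}.

Arguments lsat {sg} _ _ _.

Definition L_expressible (sg : signature) (L : abstract_logic sg)
  (K : structure sg -> Prop) : Prop :=
  exists phi : lsent L, forall A, K A <-> lsat L A phi.

Definition extends_FO (sg : signature) (L : abstract_logic sg) : Prop :=
  forall K : structure sg -> Prop, FO_expressible K -> L_expressible L K.

(** aleph_0-compactness: every countable finitely satisfiable set of sentences
    is satisfiable (countable sets presented as enumerations; the empty set
    is trivially satisfiable). *)
Definition aleph0_compact (sg : signature) (L : abstract_logic sg) : Prop :=
  forall Gamma : nat -> lsent L,
    (forall n, exists A, forall i, i <= n -> lsat L A (Gamma i)) ->
    exists A, forall i, lsat L A (Gamma i).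

Definition closed_under_negation (sg : signature) (L : abstract_logic sg) : Prop :=
  forall phi : lsent L, exists psi : lsent L,
    forall A, lsat L A psi <-> ~ lsat L A phi.

Definition entails (sg : signature) (L : abstract_logic sg)
  (Gamma : lsent L -> Prop) (psi : lsent L) : Prop :=
  forall A, (forall phi, Gamma phi -> lsat L A phi) -> lsat L A psi.

Record proof_system (sg : signature) (L : abstract_logic sg) := ProofSystem {
  proofs : Type;
  premisses : proofs -> list (lsent L);
  conclusion : proofs -> lsent L
}.

Arguments premisses {sg L p} _.
Arguments conclusion {sg L p} _.

Definition sound (sg : signature) (L : abstract_logic sg) (PS : proof_system L) : Prop :=
  forall pi : proofs PS,
    entails L (fun phi => In phi (premisses pi)) (conclusion pi).

Definition complete (sg : signature) (L : abstract_logic sg) (PS : proof_system L) : Prop :=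
  forall (Gamma : lsent L -> Prop) (psi : lsent L), entails L Gamma psi ->
    exists pi : proofs PS, conclusion pi = psi /\
      forall phi, In phi (premisses pi) -> Gamma phi.

(* Main.v *)
Require Import Defs.
From Stdlib Require Import Arith List Relations Lia Classical ClassicalEpsilon FunctionalExtensionality.
From Stdlib Require Vectors.Fin Arith.Cantor Logic.Eqdep.
Import ListNotations.

Section Grp.
Variable sg : signature.
Variable A : structure sg.

Definition id_aut : aut A.
Proof. refine (@Aut sg A (fun a => a) (fun a => a) _ _ _); intros; reflexivity. Defined.

Definition inv_aut (h : aut A) : aut A.
Proof.
  refine (@Aut sg A (ag h) (af h) (aut_fg h) (aut_gf h) _).
  intros s t. rewrite (aut_rel h s (fun i => ag h (t i))).
  replace (fun i => af h (ag h (t i))) with t. tauto.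
  apply functional_extensionality; intro i; now rewrite aut_fg.
Defined.

Definition comp_aut (h1 h2 : aut A) : aut A.
Proof.
  refine (@Aut sg A (fun a => af h1 (af h2 a)) (fun a => ag h2 (ag h1 a)) _ _ _).
  - intro a; now rewrite !aut_gf.
  - intro a; now rewrite !aut_fg.
  - intros s t. rewrite (aut_rel h2 s t). apply (aut_rel h1 s (fun i => af h2 (t i))).
Defined.

Variable n : nat.
Variable gens : Fin.t n -> aut A.

Lemma weval_app (u v : word n) a : weval gens (u ++ v) a = weval gens u (weval gens v a).
Proof. induction u as [|[i b] u IH]; simpl; auto. now rewrite IH. Qed.

Definition letter_aut (l : Fin.t n * bool) : aut A :=
  let (i, b) := l in if b then gens i else inv_aut (gens i).

Lemma word_aut (w : word n) : exists h : aut A, forall a, af h a = weval gens w a.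
Proof.
  induction w as [|[i b] w IH]; simpl.
  - exists id_aut; reflexivity.
  - destruct IH as [h Hh]. exists (comp_aut (letter_aut (i,b)) h).
    intro a; simpl. rewrite Hh. destruct b; reflexivity.
Qed.

Fixpoint all_fin (k : nat) : list (Fin.t k) :=
  match k with 0 => [] | S m => Fin.F1 :: map Fin.FS (all_fin m) end.

Lemma all_fin_In k (i : Fin.t k) : In i (all_fin k).
Proof. induction i; simpl; auto. right; now apply in_map. Qed.

Definition letters : list (Fin.t n * bool) :=
  flat_map (fun i => [(i,true);(i,false)]) (all_fin n).

Lemma letters_In l : In l letters.
Proof. destruct l as [i b]. apply in_flat_map. exists i; split; [apply all_fin_In|].
  destruct b; simpl; auto. Qed.

Definition words3 : list (word n) :=
  map (fun l => [l]) letters ++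
  flat_map (fun l1 => map (fun l2 => [l1;l2]) letters) letters ++
  flat_map (fun l1 => flat_map (fun l2 => map (fun l3 => [l1;l2;l3]) letters) letters) letters.

Definition triv (w : word n) : Prop := forall a, weval gens w a = a.
Definition trivb (w : word n) : bool :=
  if excluded_middle_informative (triv w) then true else false.
Definition rels : list (word n) := filter trivb words3.

Lemma rels_In w : In w words3 -> triv w -> In w rels.
Proof. intros H1 H2. apply filter_In; split; auto. unfold trivb.
  destruct excluded_middle_informative; tauto. Qed.

Lemma rels_triv w : In w rels -> triv w.
Proof. intro H. apply filter_In in H. destruct H as [_ H]. unfold trivb in H.
  destruct excluded_middle_informative; auto; discriminate. Qed.

Lemma w1_In l : In [l] words3.
Proof. unfold words3. apply in_or_app; left. apply (in_map (fun l => [l])), letters_In. Qed.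
Lemma w2_In l1 l2 : In [l1;l2] words3.
Proof. unfold words3. apply in_or_app; right; apply in_or_app; left.
  apply in_flat_map; exists l1; split; [apply letters_In|]. apply (in_map (fun l2 => [l1;l2])), letters_In. Qed.
Lemma w3_In l1 l2 l3 : In [l1;l2;l3] words3.
Proof. unfold words3. apply in_or_app; right; apply in_or_app; right.
  apply in_flat_map; exists l1; split; [apply letters_In|].
  apply in_flat_map; exists l2; split; [apply letters_In|]. apply (in_map (fun l3 => [l1;l2;l3])), letters_In. Qed.

Lemma sound_step w w' : wstep rels w w' -> forall a, weval gens w a = weval gens w' a.
Proof.
  intros H a. destruct H as [u v i b|u v r Hr].
  - rewrite !weval_app. simpl. destruct b; simpl; [rewrite aut_fg|rewrite aut_gf]; reflexivity.
  - rewrite !weval_app. now rewrite (rels_triv _ Hr).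
Qed.

Lemma sound_conv w w' : wconv rels w w' -> forall a, weval gens w a = weval gens w' a.
Proof.
  intro H. induction H; intro a.
  - now apply sound_step.
  - reflexivity.
  - now rewrite IHclos_refl_sym_trans.
  - now rewrite IHclos_refl_sym_trans1, IHclos_refl_sym_trans2.
Qed.

Hypothesis cover : forall h : aut A, exists i, forall a, af (gens i) a = af h a.

Lemma combine2 l1 l2 w : exists k, wconv rels (l1 :: l2 :: w) ((k,true) :: w).
Proof.
  destruct (word_aut [l1;l2]) as [h Hh]. destruct (cover h) as [k Hk].
  exists k. eapply rst_trans.
  - apply rst_sym. apply rst_step. exact (wstep_free rels [l1;l2] w k false).
  - apply rst_step. apply (wstep_rel rels [] ((k,true)::w) [l1;l2;(k,false)]).
    apply rels_In; [apply w3_In|]. intro a.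
    change (weval gens ([l1;l2] ++ [(k,false)]) a = a). rewrite weval_app.
    change (weval gens [(k,false)] a) with (ag (gens k) a).
    rewrite <- Hh, <- Hk. apply aut_fg.
Qed.

Lemma combine1 l : exists k, wconv rels [l] [(k,true)].
Proof.
  destruct (word_aut [l]) as [h Hh]. destruct (cover h) as [k Hk].
  exists k. eapply rst_trans.
  - apply rst_sym. apply rst_step. exact (wstep_free rels [l] [] k false).
  - apply rst_step. apply (wstep_rel rels [] [(k,true)] [l;(k,false)]).
    apply rels_In; [apply w2_In|]. intro a.
    change (weval gens ([l] ++ [(k,false)]) a = a). rewrite weval_app.
    change (weval gens [(k,false)] a) with (ag (gens k) a).
    rewrite <- Hh, <- Hk. apply aut_fg.
Qed.

Lemma reduce w : forall l, exists k, wconv rels (l :: w) [(k,true)].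
Proof.
  induction w as [|l2 w IH]; intro l.
  - apply combine1.
  - destruct (combine2 l l2 w) as [k0 H0]. destruct (IH (k0,true)) as [k H].
    exists k. eapply rst_trans; eauto.
Qed.

Lemma fin_pres_of_cover : aut_fin_pres A.
Proof.
  exists n, gens, rels. split.
  - intro h. destruct (cover h) as [i Hi]. exists [(i,true)]. intro a. simpl. apply Hi.
  - intro w; split.
    + intro Ht. destruct w as [|l w]; [apply rst_refl|].
      destruct (reduce w l) as [k Hk]. eapply rst_trans; [exact Hk|].
      apply rst_step. apply (wstep_rel rels [] [] [(k,true)]).
      apply rels_In; [apply w1_In|]. intro a. rewrite <- (sound_conv _ _ Hk a). apply Ht.
    + intros H a. rewrite (sound_conv _ _ H a). reflexivity.
Qed.

End Grp.
From Stdlib Require Import List.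
From mathcomp Require ssreflect ssrbool ssrfun eqtype ssrnat seq choice fintype finfun fingroup perm.

Definition pureF (sg : signature) (m : nat) : structure sg :=
  @Structure sg (fintype.ordinal (S m)) (inhabits (@fintype.ord0 m)) (fun _ _ => False).

Module FinPart.
Import ssreflect ssrbool ssrfun eqtype ssrnat seq choice fintype finfun fingroup perm.

Lemma inIn (T : eqType) (x : T) (s : seq T) : x \in s -> List.In x s.
Proof. elim: s => [|y s IH] //=. rewrite in_cons => /orP [/eqP ->|/IH]; auto. Qed.

Lemma uniqND (T : eqType) (s : seq T) : uniq s -> List.NoDup s.
Proof. elim: s => [|y s IH] /=; first by constructor. move=> /andP [Hn Hu]; constructor; auto.
move=> Hin; move/negP: Hn; apply. clear IH Hu. elim: s Hin => [|z s IH] Hin /=; first by case: Hin.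
case: Hin => [E|H]; rewrite in_cons. by rewrite E eqxx. by rewrite IH ?orbT. Qed.

Lemma pure_nodup sg m : exists l : list (pureF sg m), List.NoDup l /\ List.length l = S m.
Proof.
  refine (ex_intro _ (enum (ordinal m.+1)) _). split; first exact: uniqND (enum_uniq _).
  rewrite -[RHS](size_enum_ord m.+1). by elim: (enum _) => //= x s ->.
Qed.

Definition mkaut sg m (p : {perm 'I_(S m)}) : aut (pureF sg m).
Proof.
  refine (@Aut sg (pureF sg m) (fun x => p x) (fun x => (p^-1)%g x) _ _ _).
  - move=> a; exact: permK.
  - move=> a; exact: permKV.
  - move=> s t; simpl; tauto.
Defined.

Lemma pure_cover sg m : exists L : list (aut (pureF sg m)),
  forall h, exists x, List.In x L /\ forall a, af x a = af h a.
Proof.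
  exists (List.map (@mkaut sg m) (enum {perm 'I_(S m)})).
  move=> h.
  have inj : injective (af h : 'I_(S m) -> 'I_(S m)).
  { move=> a b E. by rewrite -(aut_gf h a) E aut_gf. }
  exists (@mkaut sg m (perm inj)). split.
  - apply: List.in_map. apply: inIn. by rewrite mem_enum.
  - move=> a /=. exact: permE.
Qed.
End FinPart.

Lemma gens_of_list sg (A : structure sg) (L : list (aut A)) :
  (forall h, exists x, In x L /\ forall a, af x a = af h a) ->
  exists n (gens : Fin.t n -> aut A), forall h, exists i, forall a, af (gens i) a = af h a.
Proof.
  intro HL. exists (length L), (fun i => nth (proj1_sig (Fin.to_nat i)) L (@id_aut _ A)).
  intro h. destruct (HL h) as [x [Hx Hxh]]. destruct (In_nth L x (@id_aut _ A) Hx) as [k [Hk Hkx]].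
  exists (Fin.of_nat_lt Hk). rewrite Fin.to_nat_of_nat. simpl. rewrite Hkx. exact Hxh.
Qed.

Lemma P_of_cover sg (A : structure sg) n (gens : Fin.t n -> aut A) :
  (forall h, exists i, forall a, af (gens i) a = af h a) ->
  forall P, has_property P A.
Proof.
  intros cov P. destruct P; simpl.
  - exists (map gens (all_fin n)). intro h. destruct (cov h) as [i Hi].
    apply (gen_base _ (gens i)); auto. apply in_map, (all_fin_In _).
  - exists (fun k => nth k (map gens (all_fin n)) (@id_aut _ A)). intro h.
    destruct (cov h) as [i Hi]. apply (gen_base _ (gens i)); auto.
    destruct (In_nth _ (gens i) (@id_aut _ A) (in_map gens _ _ (all_fin_In _ i))) as [k [_ Hk]].
    eauto.
  - apply (@fin_pres_of_cover _ A n gens cov).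
Qed.

Lemma pureF_P sg m P : has_property P (pureF sg m).
Proof.
  destruct (FinPart.pure_cover sg m) as [L HL].
  destruct (@gens_of_list _ _ L HL) as [n [gens Hg]]. exact (@P_of_cover _ _ n gens Hg P).
Qed.

Section NonP.
Variable sg : signature.
Variable A : structure sg.
Hypothesis Hempty : forall s t, ~ rel A s t.
Variable e : nat -> A.
Hypothesis e_inj : forall x y, e x = e y -> x = y.

Section Pi.
Variable d : nat -> bool.

Definition pi (x : A) : A :=
  match excluded_middle_informative (exists k, x = e (2 * k) /\ d k = true) with
  | left H => e (S (2 * proj1_sig (constructive_indefinite_description _ H)))
  | right _ =>
    match excluded_middle_informative (exists k, x = e (S (2 * k)) /\ d k = true) with
    | left H => e (2 * proj1_sig (constructive_indefinite_description _ H))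
    | right _ => x
    end
  end.

Lemma pi_spec x :
  (exists k, x = e (2 * k) /\ d k = true /\ pi x = e (S (2 * k))) \/
  (exists k, x = e (S (2 * k)) /\ d k = true /\ pi x = e (2 * k)) \/
  ((forall k, d k = true -> x <> e (2 * k) /\ x <> e (S (2 * k))) /\ pi x = x).
Proof.
  unfold pi. destruct (excluded_middle_informative (exists k, x = e (2 * k) /\ d k = true)) as [H|H].
  - left. destruct (constructive_indefinite_description _ H) as [k [Hk Hd]]. exists k; repeat split; auto.
  - destruct (excluded_middle_informative (exists k, x = e (S (2 * k)) /\ d k = true)) as [H'|H'].
    + right; left. destruct (constructive_indefinite_description _ H') as [k [Hk Hd]]. exists k; repeat split; auto.
    + right; right. split; auto. intros k Hk; split; intro E; [apply H|apply H']; eauto.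
Qed.

Lemma pi_invol x : pi (pi x) = x.
Proof.
  destruct (pi_spec x) as [[k [Hx [Hd Hp]]]|[[k [Hx [Hd Hp]]]|[Hn Hp]]]; rewrite Hp.
  - destruct (pi_spec (e (S (2 * k)))) as [[j [Hx' [Hd' Hp']]]|[[j [Hx' [Hd' Hp']]]|[Hn' Hp']]].
    + apply e_inj in Hx'. lia.
    + apply e_inj in Hx'. assert (j = k) by lia. subst. rewrite Hp'. auto.
    + exfalso. apply (proj2 (Hn' k Hd)). auto.
  - destruct (pi_spec (e (2 * k))) as [[j [Hx' [Hd' Hp']]]|[[j [Hx' [Hd' Hp']]]|[Hn' Hp']]].
    + apply e_inj in Hx'. assert (j = k) by lia. subst. rewrite Hp'. auto.
    + apply e_inj in Hx'. lia.
    + exfalso. apply (proj1 (Hn' k Hd)). auto.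
  - exact Hp.
Qed.

Lemma pi_even k : pi (e (2 * k)) = if d k then e (S (2 * k)) else e (2 * k).
Proof.
  destruct (pi_spec (e (2 * k))) as [[j [Hx [Hd Hp]]]|[[j [Hx [Hd Hp]]]|[Hn Hp]]].
  - apply e_inj in Hx. assert (j = k) by lia. subst. now rewrite Hd.
  - apply e_inj in Hx. lia.
  - rewrite Hp. destruct (d k) eqn:E; auto. exfalso; apply (proj1 (Hn k E)); auto.
Qed.

Definition pi_aut : aut A.
Proof.
  refine (@Aut sg A pi pi pi_invol pi_invol _).
  intros s t. split; intro H; exfalso; eapply Hempty; eauto.
Defined.
End Pi.

Lemma no_surj (W : Type) (code : W -> nat) (code_inj : forall x y, code x = code y -> x = y)
  (F : W -> A -> A) : ~ (forall h : aut A, exists w, forall a, F w a = af h a).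
Proof.
  intro Hs.
  set (d := fun n => if excluded_middle_informative
             (exists w, code w = n /\ F w (e (2 * n)) = e (S (2 * n))) then false else true).
  destruct (Hs (pi_aut d)) as [w Hw]. simpl in Hw.
  pose proof (Hw (e (2 * code w))) as H1. rewrite pi_even in H1.
  destruct (d (code w)) eqn:E; unfold d in E;
    destruct excluded_middle_informative as [Hex|Hn]; try discriminate.
  - apply Hn. eauto.
  - destruct Hex as [w' [Hc Hf]]. apply code_inj in Hc. subst w'.
    rewrite H1 in Hf. apply e_inj in Hf. lia.
Qed.

End NonP.

Fixpoint codeL (l : list (nat * bool)) : nat :=
  match l with
  | [] => 0
  | (a, b) :: l' => S (Cantor.to_nat (Cantor.to_nat (a, if b then 1 else 0), codeL l'))
  end.

Lemma cinj p q : Cantor.to_nat p = Cantor.to_nat q -> p = q.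
Proof. intro H. rewrite <- (Cantor.cancel_of_to p), <- (Cantor.cancel_of_to q), H. reflexivity. Qed.

Lemma codeL_inj l1 l2 : codeL l1 = codeL l2 -> l1 = l2.
Proof.
  revert l2; induction l1 as [|[a b] l1 IH]; intros [|[a' b'] l2] H; cbn [codeL] in H;
    try discriminate; auto.
  apply eq_add_S in H. apply cinj in H.
  assert (H1 := f_equal fst H); assert (H2 := f_equal snd H); cbn [fst snd] in H1, H2.
  apply cinj in H1. clear H.
  assert (H3 := f_equal snd H1); assert (H4 := f_equal fst H1); cbn [fst snd] in H3, H4. subst a'. apply IH in H2. subst.
  destruct b, b'; simpl in H3; try discriminate; auto.
Qed.

Fixpoint wevalN {sg} {A : structure sg} (X : nat -> aut A) (w : list (nat * bool)) : A -> A :=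
  match w with
  | [] => fun a => a
  | (i, b) :: w' => fun a => (if b then af (X i) else ag (X i)) (wevalN X w' a)
  end.

Lemma wevalN_app sg (A : structure sg) X u v a : @wevalN sg A X (u ++ v) a = wevalN X u (wevalN X v a).
Proof. induction u as [|[i b] u IH]; simpl; auto. now rewrite IH. Qed.

Definition invw (w : list (nat * bool)) := rev (map (fun p => (fst p, negb (snd p))) w).

Lemma invw_spec sg (A : structure sg) X w a : @wevalN sg A X (invw w) (wevalN X w a) = a.
Proof.
  induction w as [|[i b] w IH]; simpl; auto. unfold invw in *. simpl.
  rewrite wevalN_app. simpl. destruct b; simpl; [rewrite aut_gf|rewrite aut_fg]; apply IH.
Qed.

Lemma in_gen_word sg (A : structure sg) (X : nat -> aut A) h :
  in_gen (fun x => exists n, X n = x) h -> exists w, forall a, wevalN X w a = af h a.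
Proof.
  intro H. induction H as [x h [k Hk] Hx|h Hh|h1 h2 h _ [w1 H1] _ [w2 H2] Hh|h1 h _ [w1 H1] Hh].
  - exists [(k,true)]. intro a. simpl. subst. auto.
  - exists []. intro a. simpl. auto.
  - exists (w1 ++ w2). intro a. rewrite wevalN_app, H2, H1. auto.
  - exists (invw w1). intro a. rewrite Hh.
    rewrite <- (aut_fg h1 a) at 1. rewrite <- H1. apply invw_spec.
Qed.

Lemma in_gen_mono sg (A : structure sg) (X Y : aut A -> Prop) h :
  (forall x, X x -> Y x) -> in_gen X h -> in_gen Y h.
Proof.
  intros HXY H. induction H.
  - eapply gen_base; eauto.
  - now apply gen_id.
  - eapply gen_mul; [exact IHin_gen1|exact IHin_gen2|exact H1].
  - eapply gen_inv; [exact IHin_gen|exact H0].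
Qed.

Lemma nonP sg (A : structure sg) (Hempty : forall s t, ~ rel A s t)
  (e : nat -> A) (e_inj : forall x y, e x = e y -> x = y) P : ~ has_property P A.
Proof.
  assert (Hcg : ~ aut_count_gen A).
  { intros [X HX]. apply (@no_surj sg A Hempty e e_inj _ codeL codeL_inj (wevalN X)).
    intro h. apply in_gen_word, HX. }
  destruct P; simpl.
  - intros [l Hl]. apply Hcg. exists (fun k => nth k l (@id_aut _ A)). intro h.
    eapply in_gen_mono; [|apply Hl]. intros x Hx. destruct (In_nth _ _ (@id_aut _ A) Hx) as [k [_ Hk]]. eauto.
  - exact Hcg.
  - intros [n [gens [rels [Hs _]]]].
    refine (@no_surj sg A Hempty e e_inj (word n)
             (fun w => codeL (map (fun p => (proj1_sig (Fin.to_nat (fst p)), snd p)) w))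
             _ (weval gens) Hs).
    simpl.
    intros x y H. apply codeL_inj in H. revert y H; induction x as [|[i b] x IH]; intros [|[j c] y];
      simpl; try discriminate; auto.
    intro H. injection H as H1 H2 H3. apply IH in H3. subst.
    apply Fin.to_nat_inj in H1. subst. auto.
Qed.

Section FO.
Variable sg : signature.

Lemma fo_sat_ext (A : structure sg) (f : formula sg) : forall v w : nat -> A,
  (forall x, v x = w x) -> (fo_sat A v f <-> fo_sat A w f).
Proof.
  induction f; intros v w Hvw; simpl.
  - rewrite !Hvw. tauto.
  - replace (fun i => v (n i)) with (fun i => w (n i)); [tauto|].
    apply functional_extensionality; intro; now rewrite Hvw.
  - rewrite (IHf v w Hvw). tauto.
  - rewrite (IHf1 v w Hvw), (IHf2 v w Hvw). tauto.
  - rewrite (IHf1 v w Hvw), (IHf2 v w Hvw). tauto.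
  - rewrite (IHf1 v w Hvw), (IHf2 v w Hvw). tauto.
  - split; intros [a Ha]; exists a; (eapply IHf; [|exact Ha]); intro y; unfold upd;
      destruct (Nat.eqb y n); auto.
  - split; intros Ha a; (eapply IHf; [|exact (Ha a)]); intro y; unfold upd;
      destruct (Nat.eqb y n); auto.
Qed.

Definition truef : formula sg := FAll 0 (FEq 0 0).
Lemma truef_sat (A : structure sg) v : fo_sat A v truef.
Proof. simpl. auto. Qed.
Lemma truef_sent : is_sentence truef.
Proof. intros x H. inversion H; subst. inversion H3; subst; auto. Qed.

Fixpoint depth (f : formula sg) : nat :=
  match f with
  | FEq _ _ | FRel _ _ => 0
  | FNot g => depth g
  | FAnd g h | FOr g h | FImp g h => max (depth g) (depth h)
  | FEx _ g | FAll _ g => S (depth g)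
  end.

Definition room (A : Type) (K : nat) : Prop :=
  forall l : list A, length l < K -> exists a, ~ In a l.

Lemma room_mono {A K K'} : K' <= K -> room A K -> room A K'.
Proof. intros H R l Hl. apply R. lia. Qed.

Lemma room_of_nodup A (l' : list A) : NoDup l' -> room A (length l').
Proof.
  intros Hnd l Hl. apply NNPP. intro Hn.
  assert (incl l' l). { intros a Ha. apply NNPP. intro Hna. apply Hn. eauto. }
  pose proof (NoDup_incl_length Hnd H). lia.
Qed.

Definition corr {A B : Type} (V : list nat) (v : nat -> A) (w : nat -> B) : Prop :=
  forall y z, In y V -> In z V -> (v y = v z <-> w y = w z).

Lemma corr_sym {A B V v w} : @corr A B V v w -> corr V w v.
Proof. intros H y z Hy Hz. rewrite (H y z Hy Hz). tauto. Qed.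

Lemma corr_extend {A B V v w} x (a : A) : @corr A B V v w -> room B (S (length V)) ->
  exists b, corr (x :: V) (upd v x a) (upd w x b).
Proof.
  intros Hc R.
  assert (Hb : exists b, forall z, In z V -> (a = v z <-> b = w z)).
  { destruct (classic (exists y, In y V /\ v y = a)) as [[y [Hy Hya]]|Hn].
    - exists (w y). intros z Hz. subst a. apply Hc; auto.
    - destruct (R (map w V)) as [b Hb]. { rewrite length_map. lia. }
      exists b. intros z Hz. split; intro E.
      + exfalso. apply Hn. eauto.
      + exfalso. apply Hb. subst. now apply in_map. }
  destruct Hb as [b Hb]. exists b.
  intros y z Hy Hz. unfold upd.
  destruct (Nat.eqb y x) eqn:Ey, (Nat.eqb z x) eqn:Ez.
  - split; auto.
  - apply Nat.eqb_neq in Ez. destruct Hz as [Hz|Hz]; [congruence|]. apply Hb; auto.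
  - apply Nat.eqb_neq in Ey. destruct Hy as [Hy|Hy]; [congruence|].
    split; intro E; symmetry; apply Hb; auto.
  - apply Nat.eqb_neq in Ey. apply Nat.eqb_neq in Ez.
    destruct Hy as [Hy|Hy]; [congruence|]. destruct Hz as [Hz|Hz]; [congruence|]. apply Hc; auto.
Qed.

Lemma ef (A B : structure sg) (HA : forall s t, ~ rel A s t) (HB : forall s t, ~ rel B s t)
  (f : formula sg) : forall V v w,
  (forall x, free_in x f -> In x V) -> corr V v w ->
  room A (length V + depth f) -> room B (length V + depth f) ->
  (fo_sat A v f <-> fo_sat B w f).
Proof.
  induction f as [x y|s args|f IHf|f1 IHf1 f2 IHf2|f1 IHf1 f2 IHf2|f1 IHf1 f2 IHf2|n f IHf|n f IHf];
    intros V v w Hfree Hc RA RB; simpl in *.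
  - apply Hc; apply Hfree; constructor.
  - split; intro H; exfalso; [eapply HA|eapply HB]; eauto.
  - rewrite (IHf V v w); [tauto| |auto..]. intros x Hx; apply Hfree; now constructor.
  - assert (H1 : fo_sat A v f1 <-> fo_sat B w f1).
    { apply (IHf1 V); [intros x Hx; apply Hfree; now apply free_and1|exact Hc|eapply room_mono; [|exact RA]; lia|eapply room_mono; [|exact RB]; lia]. }
    assert (H2 : fo_sat A v f2 <-> fo_sat B w f2).
    { apply (IHf2 V); [intros x Hx; apply Hfree; now apply free_and2|exact Hc|eapply room_mono; [|exact RA]; lia|eapply room_mono; [|exact RB]; lia]. }
    tauto.
  - assert (H1 : fo_sat A v f1 <-> fo_sat B w f1).
    { apply (IHf1 V); [intros x Hx; apply Hfree; now apply free_or1|exact Hc|eapply room_mono; [|exact RA]; lia|eapply room_mono; [|exact RB]; lia]. }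
    assert (H2 : fo_sat A v f2 <-> fo_sat B w f2).
    { apply (IHf2 V); [intros x Hx; apply Hfree; now apply free_or2|exact Hc|eapply room_mono; [|exact RA]; lia|eapply room_mono; [|exact RB]; lia]. }
    tauto.
  - assert (H1 : fo_sat A v f1 <-> fo_sat B w f1).
    { apply (IHf1 V); [intros x Hx; apply Hfree; now apply free_imp1|exact Hc|eapply room_mono; [|exact RA]; lia|eapply room_mono; [|exact RB]; lia]. }
    assert (H2 : fo_sat A v f2 <-> fo_sat B w f2).
    { apply (IHf2 V); [intros x Hx; apply Hfree; now apply free_imp2|exact Hc|eapply room_mono; [|exact RA]; lia|eapply room_mono; [|exact RB]; lia]. }
    tauto.
  - assert (Hf' : forall x, free_in x f -> In x (n :: V)).
    { intros x Hx. destruct (Nat.eq_dec n x); [left; auto|right]. apply Hfree; now constructor. }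
    assert (RA' : room A (length (n :: V) + depth f)) by (eapply room_mono; [|exact RA]; simpl; lia).
    assert (RB' : room B (length (n :: V) + depth f)) by (eapply room_mono; [|exact RB]; simpl; lia).
    split; intros [a Ha].
    + destruct (corr_extend n a Hc) as [b Hb]. { eapply room_mono; [|exact RB]; lia. }
      exists b. eapply IHf; eauto.
    + destruct (corr_extend n a (corr_sym Hc)) as [b Hb]. { eapply room_mono; [|exact RA]; lia. }
      exists b. eapply IHf; eauto. now apply corr_sym.
  - assert (Hf' : forall x, free_in x f -> In x (n :: V)).
    { intros x Hx. destruct (Nat.eq_dec n x); [left; auto|right]. apply Hfree; now constructor. }
    assert (RA' : room A (length (n :: V) + depth f)) by (eapply room_mono; [|exact RA]; simpl; lia).
    assert (RB' : room B (length (n :: V) + depth f)) by (eapply room_mono; [|exact RB]; simpl; lia).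
    split; intros Ha b.
    + destruct (corr_extend n b (corr_sym Hc)) as [a Hb]. { eapply room_mono; [|exact RA]; lia. }
      specialize (Ha a). eapply IHf; eauto. now apply corr_sym.
    + destruct (corr_extend n b Hc) as [a Hb]. { eapply room_mono; [|exact RB]; lia. }
      specialize (Ha a). eapply IHf; eauto.
Qed.

End FO.

Section Forms.
Variable sg : signature.

Lemma fand_inv {x} {f g : formula sg} : free_in x (FAnd f g) -> free_in x f \/ free_in x g.
Proof. inversion 1; auto. Qed.
Lemma fnot_inv {x} {f : formula sg} : free_in x (FNot f) -> free_in x f.
Proof. inversion 1; auto. Qed.
Lemma feq_inv {x y z} : free_in x (@FEq sg y z) -> x = y \/ x = z.
Proof. inversion 1; auto. Qed.
Lemma fex_inv {x y} {f : formula sg} : free_in x (FEx y f) -> y <> x /\ free_in x f.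
Proof. inversion 1; auto. Qed.
Lemma fall_inv {x y} {f : formula sg} : free_in x (FAll y f) -> y <> x /\ free_in x f.
Proof. inversion 1; auto. Qed.

Lemma truef_nofree x : ~ free_in x (@truef sg).
Proof. apply truef_sent. Qed.

Fixpoint neqs (x k : nat) : formula sg :=
  match k with 0 => truef sg | S j => FAnd (neqs x j) (FNot (FEq x j)) end.

Fixpoint G (n k : nat) : formula sg :=
  match n with 0 => truef sg | S n' => FEx k (FAnd (neqs k k) (G n' (S k))) end.

Lemma neqs_sat (A : structure sg) v x k : fo_sat A v (neqs x k) <-> forall i, i < k -> v x <> v i.
Proof.
  induction k as [|k IH]; simpl.
  - split; intros; [lia|auto].
  - rewrite IH. split.
    + intros [H1 H2] i Hi. destruct (Nat.eq_dec i k); [subst; auto|apply H1; lia].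
    + intros H; split; [intros; apply H; lia|apply H; lia].
Qed.

Lemma neqs_free {x y k} : free_in x (neqs y k) -> x = y \/ x < k.
Proof.
  induction k as [|k IH]; simpl; intro H.
  - exfalso; eapply truef_nofree; eauto.
  - destruct (fand_inv H) as [H1|H1].
    + destruct (IH H1); [left; auto|right; lia].
    + apply fnot_inv, feq_inv in H1. destruct H1; [left; auto|right; lia].
Qed.

Lemma G_free n : forall k x, free_in x (G n k) -> x < k.
Proof.
  induction n as [|n IH]; simpl; intros k x H.
  - exfalso; eapply truef_nofree; eauto.
  - apply fex_inv in H. destruct H as [Hk H]. destruct (fand_inv H) as [H1|H1].
    + destruct (neqs_free H1); lia.
    + apply IH in H1. lia.
Qed.

Lemma G_room (A : structure sg) n : forall k v, room A (k + n) -> fo_sat A v (G n k).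
Proof.
  induction n as [|n IH]; intros k v R; simpl; [auto|].
  destruct (R (map v (seq 0 k))) as [a Ha]. { rewrite length_map, length_seq. lia. }
  exists a. split.
  - apply neqs_sat. intros i Hi. unfold upd. rewrite Nat.eqb_refl.
    assert (Nat.eqb i k = false) as -> by (apply Nat.eqb_neq; lia).
    intro E. apply Ha. subst. apply in_map, in_seq. lia.
  - apply IH. eapply room_mono; [|exact R]. lia.
Qed.

Lemma G_list (A : structure sg) n : forall k v, fo_sat A v (G n k) ->
  exists l, length l = n /\ NoDup l /\ forall a, In a l -> forall i, i < k -> a <> v i.
Proof.
  induction n as [|n IH]; intros k v H; simpl in H.
  - exists []. split; auto. split; [constructor|]. intros a [].
  - destruct H as [a [H1 H2]]. pose proof (proj1 (neqs_sat A (upd v k a) k k) H1) as H1'. clear H1. rename H1' into H1.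
    destruct (IH _ _ H2) as [l [Hl [Hnd Hall]]].
    exists (a :: l). split; [simpl; auto|]. split.
    + constructor; auto. intro Hin. apply (Hall a Hin k); [lia|]. unfold upd. now rewrite Nat.eqb_refl.
    + intros b [Hb|Hb] i Hi.
      * subst b. specialize (H1 i Hi). unfold upd in H1. rewrite Nat.eqb_refl in H1.
        assert (Nat.eqb i k = false) as E by (apply Nat.eqb_neq; lia). rewrite E in H1. auto.
      * specialize (Hall b Hb i). unfold upd in Hall.
        assert (Nat.eqb i k = false) as E by (apply Nat.eqb_neq; lia). rewrite E in Hall. apply Hall; lia.
Qed.

End Forms.

Section Forms2.
Variable sg : signature.

Fixpoint allwrap (k : nat) (f : formula sg) : formula sg :=
  match k with 0 => f | S j => FAll j (allwrap j f) end.

Lemma allwrap_all (A : structure sg) k f : (forall v, fo_sat A v f) -> forall v, fo_sat A v (allwrap k f).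
Proof. induction k; simpl; auto. Qed.

Lemma allwrap_elim (A : structure sg) k f : (forall v, fo_sat A v (allwrap k f)) -> forall v, fo_sat A v f.
Proof.
  induction k as [|k IH]; simpl; auto. intros H. apply IH. intro v.
  specialize (H v (v k)). eapply fo_sat_ext; [|exact H].
  intro y; unfold upd. destruct (Nat.eqb y k) eqn:E; auto. apply Nat.eqb_eq in E; now subst.
Qed.

Lemma allwrap_free k f x : free_in x (allwrap k f) -> free_in x f /\ k <= x.
Proof.
  induction k as [|k IH]; simpl; intro H; [split; auto; lia|].
  apply (fall_inv _) in H. destruct H as [Hk H]. destruct (IH H). split; auto. lia.
Qed.

Lemma frel_inv {x s} {args : Fin.t (arity sg s) -> nat} : free_in x (FRel s args) -> exists i, args i = x.
Proof.
  intro H. remember (FRel s args) as g eqn:Eg. destruct H; try discriminate.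
  injection Eg as Es Ea. subst. apply Eqdep.EqdepTheory.inj_pair2 in Ea. subst. eauto.
Qed.

Definition body (s : sym sg) : formula sg := FNot (FRel s (fun i => proj1_sig (Fin.to_nat i))).
Definition emptyf (s : sym sg) : formula sg := allwrap (arity sg s) (body s).

Lemma emptyf_sent s : is_sentence (emptyf s).
Proof.
  intros x H. apply allwrap_free in H. destruct H as [H Hx].
  apply (fnot_inv _) in H. destruct (frel_inv H) as [i Hi]. subst x. destruct (Fin.to_nat i) as [p Hp]. simpl in *. lia.
Qed.

Lemma emptyf_sat (A : structure sg) s : (forall v, fo_sat A v (emptyf s)) <-> forall t, ~ rel A s t.
Proof.
  split.
  - intros H t Hr. destruct (carrier_inhabited A) as [a0].
    pose proof (allwrap_elim _ _ _ H) as H'.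
    set (v := fun x => match lt_dec x (arity sg s) with left h => t (Fin.of_nat_lt h) | right _ => a0 end).
    apply (H' v). simpl.
    replace (fun i => v (proj1_sig (Fin.to_nat i))) with t; auto.
    apply functional_extensionality; intro i. unfold v.
    pose proof (Fin.of_nat_to_nat_inv i) as Hi.
    destruct (Fin.to_nat i) as [p Hp]. simpl in *.
    destruct (lt_dec p (arity sg s)) as [h|h]; [|lia].
    rewrite <- Hi at 1. f_equal. apply Fin.of_nat_ext.
  - intros H. apply allwrap_all. intros v Hr. eapply H; exact Hr.
Qed.

Variable code : sym sg -> nat.
Hypothesis code_inj : forall s t, code s = code t -> s = t.

Definition symform (c : nat) : formula sg :=
  match excluded_middle_informative (exists s, code s = c) with
  | left H => emptyf (proj1_sig (constructive_indefinite_description _ H))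
  | right _ => truef sg
  end.

Lemma symform_sent c : is_sentence (symform c).
Proof. unfold symform. destruct excluded_middle_informative; [apply emptyf_sent|apply truef_sent]. Qed.

Lemma symform_sat (A : structure sg) c :
  (forall v, fo_sat A v (symform c)) <-> forall s, code s = c -> forall t, ~ rel A s t.
Proof.
  unfold symform. destruct excluded_middle_informative as [H|H].
  - destruct (constructive_indefinite_description _ H) as [s0 Hs0]. simpl. rewrite emptyf_sat.
    split.
    + intros H1 s Hs. rewrite <- Hs0 in Hs. apply code_inj in Hs. subst. auto.
    + intros H1. apply H1; auto.
  - split; intros.
    + exfalso; eauto.
    + apply truef_sat.
Qed.

Fixpoint Eform (c : nat) : formula sg :=
  match c with 0 => truef sg | S c' => FAnd (Eform c') (symform c') end.

Lemma Eform_sent c : is_sentence (Eform c).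
Proof.
  induction c as [|c IH]; simpl; [apply truef_sent|].
  intros x H. destruct (fand_inv _ H) as [H1|H1]; [exact (IH x H1)|exact (symform_sent c x H1)].
Qed.

Lemma Eform_sat (A : structure sg) c :
  (forall v, fo_sat A v (Eform c)) <-> forall s, code s < c -> forall t, ~ rel A s t.
Proof.
  induction c as [|c IH]; simpl.
  - split; intros; [lia|apply truef_sat].
  - split.
    + intros H s Hs. destruct (Nat.eq_dec (code s) c) as [E|E].
      * apply (proj1 (symform_sat A c)); auto. intro v; apply H.
      * apply (proj1 IH); [intro v; apply H|lia].
    + intros H v. split.
      * revert v. apply IH. intros s Hs. apply H. lia.
      * revert v. apply symform_sat. intros s Hs. apply H. lia.
Qed.

Definition Kclass (n : nat) (A : structure sg) : Prop :=
  (exists l : list A, NoDup l /\ n <= length l) /\ (forall s, code s < n -> forall t, ~ rel A s t).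

Lemma K_expr n : FO_expressible (Kclass n).
Proof.
  exists (FAnd (G sg n 0) (Eform n)). split.
  - intros x H. destruct (fand_inv _ H) as [H1|H1]; [apply G_free in H1; lia|exact (Eform_sent n x H1)].
  - intro A. split.
    + intros [[l [Hnd Hl]] HE] v. split.
      * apply G_room. eapply room_mono; [|apply (@room_of_nodup _ _ Hnd)]. lia.
      * revert v. now apply Eform_sat.
    + intro H. split.
      * destruct (carrier_inhabited A) as [a0].
        destruct (G_list _ _ _ 0 (fun _ => a0) (proj1 (H (fun _ => a0)))) as [l [Hl [Hnd _]]].
        exists l. split; auto. lia.
      * apply Eform_sat. intro v; apply H.
Qed.

End Forms2.

Definition pureN (sg : signature) : structure sg :=
  @Structure sg nat (inhabits 0) (fun _ _ => False).

Lemma sum_ge (l : list nat) x : In x l -> x <= fold_right plus 0 l.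
Proof. induction l; simpl; intros []; subst; try lia. specialize (IHl H). lia. Qed.

Lemma pureN_room sg K : room (pureN sg) K.
Proof. intros l _. exists (S (fold_right plus 0 l)). intro H. apply sum_ge in H. lia. Qed.

Lemma pureF_room sg m K : K <= S m -> room (pureF sg m) K.
Proof.
  intro HK. destruct (FinPart.pure_nodup sg m) as [l [Hnd Hl]].
  eapply room_mono; [|apply (@room_of_nodup _ _ Hnd)]. lia.
Qed.

Section Inf.
Variable A : Type.
Hypothesis Hroom : forall K, room A K.

Lemma newp (l : list A) : exists a, ~ In a l.
Proof. apply (Hroom (S (length l))). lia. Qed.

Definition newe (l : list A) : A := proj1_sig (constructive_indefinite_description _ (newp l)).
Lemma newe_spec l : ~ In (newe l) l.
Proof. unfold newe. destruct constructive_indefinite_description; auto. Qed.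

Fixpoint sq (n : nat) : list A := match n with 0 => [] | S m => newe (sq m) :: sq m end.
Definition einf (n : nat) : A := newe (sq n).

Lemma einf_in i j : i < j -> In (einf i) (sq j).
Proof.
  induction j as [|j IH]; intro H; [lia|]. simpl.
  destruct (Nat.eq_dec i j); [left; subst; reflexivity|right; apply IH; lia].
Qed.

Lemma einf_inj x y : einf x = einf y -> x = y.
Proof.
  intro E. destruct (Nat.lt_total x y) as [H|[H|H]]; auto.
  - exfalso. apply (newe_spec (sq y)). fold (einf y). rewrite <- E. now apply einf_in.
  - exfalso. apply (newe_spec (sq x)). fold (einf x). rewrite E. now apply einf_in.
Qed.
End Inf.

Lemma part2 sg (code : sym sg -> nat) (code_inj : forall s t, code s = code t -> s = t) P
  (L : abstract_logic sg) : extends_FO L ->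
  L_expressible L (fun A => has_property P A) -> ~ aleph0_compact L.
Proof.
  intros Hext [phi Hphi] Hc.
  set (theta := fun n => proj1_sig (constructive_indefinite_description _ (Hext _ (K_expr sg code code_inj n)))).
  assert (Htheta : forall n A, Kclass sg code n A <-> lsat L A (theta n)).
  { intros n A. unfold theta. destruct constructive_indefinite_description as [t Ht]. apply Ht. }
  set (Gamma := fun i => match i with 0 => phi | S n => theta n end).
  destruct (Hc Gamma) as [A HA].
  - intro N. exists (pureF sg N). intros [|i] Hi; simpl.
    + apply Hphi. apply pureF_P.
    + apply Htheta. split.
      * destruct (FinPart.pure_nodup sg N) as [l [Hnd Hl]]. exists l. split; auto. lia.
      * intros s _ t H. exact H.
  - assert (HP : has_property P A) by (apply Hphi, (HA 0)).
    assert (HK : forall n, Kclass sg code n A) by (intro n; apply Htheta, (HA (S n))).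
    assert (Hemp : forall s t, ~ rel A s t).
    { intros s. apply (proj2 (HK (S (code s)))). lia. }
    assert (Hr : forall K, room A K).
    { intro K. destruct (proj1 (HK K)) as [l [Hnd Hl]]. eapply room_mono; [|apply (@room_of_nodup _ _ Hnd)]. lia. }
    exact (nonP _ _ Hemp _ (einf_inj _ Hr) _ HP).
Qed.

Lemma compact_of_ps sg (L : abstract_logic sg) : closed_under_negation L ->
  (exists PS : proof_system L, sound PS /\ complete PS) -> aleph0_compact L.
Proof.
  intros Hneg [PS [Hs Hcmp]] Gamma Hfin. apply NNPP. intro Hno.
  set (Gs := fun phi => exists i, Gamma i = phi).
  assert (Hent : forall psi, entails L Gs psi).
  { intros psi A HA. exfalso. apply Hno. exists A. intro i. apply HA. exists i; auto. }
  destruct (Hneg (Gamma 0)) as [psi' Hpsi'].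
  destruct (Hcmp Gs (Gamma 0) (Hent _)) as [pi1 [Hc1 Hp1]].
  destruct (Hcmp Gs psi' (Hent _)) as [pi2 [Hc2 Hp2]].
  assert (Hbound : forall l : list (lsent L), (forall phi, In phi l -> Gs phi) ->
            exists N, forall phi, In phi l -> exists i, i <= N /\ Gamma i = phi).
  { induction l as [|x l IH]; intro H.
    - exists 0. intros _ [].
    - destruct IH as [N HN]. { intros; apply H; simpl; auto. }
      destruct (H x (or_introl eq_refl)) as [j Hj].
      exists (max N j). intros phi [E|E].
      + subst. exists j. split; auto. lia.
      + destruct (HN phi E) as [i [Hi Ei]]. exists i. split; auto. lia. }
  destruct (Hbound _ Hp1) as [N1 HN1]. destruct (Hbound _ Hp2) as [N2 HN2].
  destruct (Hfin (max N1 N2)) as [A HA].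
  assert (H1 : lsat L A (conclusion pi1)).
  { apply Hs. intros phi Hphi. destruct (HN1 phi Hphi) as [i [Hi Ei]]. subst. apply HA. lia. }
  assert (H2 : lsat L A (conclusion pi2)).
  { apply Hs. intros phi Hphi. destruct (HN2 phi Hphi) as [i [Hi Ei]]. subst. apply HA. lia. }
  rewrite Hc1 in H1. rewrite Hc2 in H2. apply Hpsi' in H2. auto.
Qed.

Theorem mainTheorem6 (sg : signature)
  (hcount : countable_signature sg)
  (harity : exists s : sym sg, 2 <= arity sg s)
  (P : AutProperty) :
  ~ FO_expressible (fun A : structure sg => has_property P A) /\
  (forall L : abstract_logic sg, extends_FO L ->
     L_expressible L (fun A => has_property P A) -> ~ aleph0_compact L) /\
  (forall L : abstract_logic sg, extends_FO L ->
     L_expressible L (fun A => has_property P A) -> closed_under_negation L ->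
     ~ exists PS : proof_system L, sound PS /\ complete PS).
Proof.
  destruct hcount as [code code_inj].
  split; [|split].
  - intros [f [Hs Hf]].
    assert (HA : forall v, fo_sat (pureF sg (depth sg f)) v f) by (apply Hf, pureF_P).
    assert (HB : has_property P (pureN sg)).
    { apply Hf. intro w.
      refine (proj1 (@ef sg (pureF sg (depth sg f)) (pureN sg) _ _ f [] (fun _ => @fintype.ord0 (depth sg f)) w _ _ _ _) (HA _)).
      - intros s t H; exact H.
      - intros s t H; exact H.
      - intros x Hx. exfalso. exact (Hs x Hx).
      - intros y z [].
      - apply pureF_room. simpl. lia.
      - apply pureN_room. }
    refine (@nonP sg (pureN sg) _ (fun n => n) _ P HB).
    + intros s t H; exact H.
    + auto.
  - intros L Hext HL. exact (part2 _ code code_inj P L Hext HL).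
  - intros L Hext HL Hneg Hps. exact (part2 _ code code_inj P L Hext HL (compact_of_ps _ L Hneg Hps)).
Qed.
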